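(* For every integer $k\ge1$, the series $G_k(x)=1+\sum_{n\ge0}\big|\mathcal A_{n}^{(k)}\big|x^{n+1}$ satisfies $$G_k(x)=-\frac{U_{k-2}(x/2)+(-1)^kU_{k-3}(x/2)}{U_k(x/2)+(-1)^kU_{k-1}(x/2)}.$$
   Context: For integers $n\ge0$ and $k\ge1$, $\mathcal A_n^{(k)}$ is the set of all integer sequences $(a_1,\dots,a_n)$ with $1\le a_i\le k$ and $a_1\le a_2\ge a_3\le a_4\ge\cdots$ (i.e. $a_{2j-1}\le a_{2j}$ and $a_{2j}\ge a_{2j+1}$ whenever defined); $\mathcal A_0^{(k)}$ consists of the empty sequence. $U_n$ is the Chebyshev polynomial of the second kind, defined for all integers $n$ by $U_0=1$, $U_1(x)=2x$ and $U_{n+1}(x)=2xU_n(x)-U_{n-1}(x)$ (so $U_{-1}=0$, $U_{-2}=-1$). *)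

(* Defs.v *)
From HB Require Import structures.
From mathcomp Require Import all_boot all_order all_algebra.
Set Implicit Arguments. Unset Strict Implicit. Unset Printing Implicit Defensive.
Import Order.TTheory GRing.Theory Num.Theory.
Local Open Scope ring_scope.

(* Chebyshev polynomials of the second kind, for n >= 0:
   U_0 = 1, U_1 = 2X, U_{n+2} = 2X U_{n+1} - U_n.  Computed as pairs (U_n, U_{n+1}). *)
Fixpoint chebU_pair (R : comNzRingType) (n : nat) : {poly R} * {poly R} :=
  match n with
  | 0%N => (1, 2%:R *: 'X)
  | n'.+1 => let: (a, b) := chebU_pair R n' in (b, 2%:R *: 'X * b - a)
  end.

Definition chebU_nat (R : comNzRingType) (n : nat) : {poly R} := (chebU_pair R n).1.

(* Extension to all integers by the same recurrence:
   U_{-1} = 0, U_{-m-2} = - U_m  (so U_{-2} = -1). *)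
Definition chebU (R : comNzRingType) (n : int) : {poly R} :=
  match n with
  | Posz m => chebU_nat R m
  | Negz 0 => 0
  | Negz m.+1 => - chebU_nat R m
  end.

Definition chebU_half (n : int) : {poly rat} := chebU rat n \Po (2%:R^-1 *: 'X).

(* The up-down (alternating) condition a_1 <= a_2 >= a_3 <= a_4 >= ... on a
   sequence s (0-indexed: s_i <= s_{i+1} for i even, s_i >= s_{i+1} for i odd),
   together with 1 <= a_i <= k and length n. *)
Definition in_A (n k : nat) (s : seq nat) : bool :=
  [&& size s == n,
      all (fun a => (1 <= a <= k)%N) s &
      [forall i : 'I_n, (i.+1 < n)%N ==>
         (if ~~ odd i then (nth 0%N s i <= nth 0%N s i.+1)%N
          else (nth 0%N s i.+1 <= nth 0%N s i)%N)]].

(* |A_n^(k)|: every sequence with entries in {1..k} of length n is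
   [seq (f i).+1 | i <- enum 'I_n] for a unique f : {ffun 'I_n -> 'I_k}. *)
Definition cardA (n k : nat) : nat :=
  #|[set f : {ffun 'I_n -> 'I_k} | in_A n k [seq (f i : nat).+1 | i <- enum 'I_n]]|.

Definition Gcoef (k m : nat) : rat :=
  match m with 0%N => 1 | n.+1 => (cardA n k)%:R end.

Definition Gnum (k : nat) : {poly rat} :=
  chebU_half (k%:Z - 2) + (-1) ^+ k *: chebU_half (k%:Z - 3).
Definition Gden (k : nat) : {poly rat} :=
  chebU_half k%:Z + (-1) ^+ k *: chebU_half (k%:Z - 1).

(* Main.v *)
Require Import Defs.
From HB Require Import structures.
From mathcomp Require Import all_boot all_order all_algebra.
From mathcomp Require Import zify ring lra.
Import Order.TTheory GRing.Theory Num.Theory.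
Set Implicit Arguments. Unset Strict Implicit.

Definition stepr (i a b : nat) : bool := if ~~ odd i then (a <= b)%N else (b <= a)%N.

Definition ok n (h : nat -> nat) : bool :=
  [forall i : 'I_n, (i.+1 < n) ==> stepr i (h i) (h i.+1)].

Definition seqf n K (f : {ffun 'I_n -> 'I_K}) : seq nat := [seq (f i : nat).+1 | i <- enum 'I_n].

Lemma inA_ok n K (f : {ffun 'I_n -> 'I_K}) :
  in_A n K (seqf f) = ok n (nth 0 (seqf f)).
Proof.
rewrite /in_A /seqf size_map size_enum_ord eqxx /=.
have -> : all (fun a => 0 < a <= K) [seq (f i : nat).+1 | i <- enum 'I_n] by
  apply/allP => x /mapP [i _ ->]; rewrite /= ltn_ord.
by [].
Qed.

Lemma nth_seqf n K (f : {ffun 'I_n -> 'I_K}) (i : 'I_n) : nth 0 (seqf f) i = (f i).+1.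
Proof. by rewrite /seqf (nth_map i) ?size_enum_ord ?nth_ord_enum. Qed.

Lemma ok_iota n h : ok n h = all (fun i => stepr i (h i) (h i.+1)) (iota 0 n.-1).
Proof.
apply/forallP/allP => [H i|H i].
- rewrite mem_iota add0n => hi.
  have hin : (i < n)%N by lia.
  by have := H (Ordinal hin); rewrite /= (_ : (i.+1 < n)%N = true) //; lia.
- apply/implyP => hi; apply: H; rewrite mem_iota; lia.
Qed.

Lemma ok_rec n h : ok n.+2 h = ok n.+1 h && stepr n (h n) (h n.+1).
Proof.
have e : iota 0 n.+1 = iota 0 n ++ [:: n] by rewrite -addn1 iotaD.
by rewrite !ok_iota [n.+2.-1]/= [n.+1.-1]/= e all_cat /= andbT. Qed.

Lemma ok1 h : ok 1 h.
Proof. by rewrite ok_iota. Qed.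

Lemma ok0 h : ok 0 h.
Proof. by rewrite ok_iota. Qed.

Lemma ok_ext n h h' : (forall m, (m < n)%N -> h m = h' m) -> ok n h = ok n h'.
Proof.
move=> E; rewrite !ok_iota; apply: eq_in_all => i; rewrite mem_iota => hi.
by rewrite !E //; lia.
Qed.

Section Join.
Variables (K n : nat).
Definition join (p : {ffun 'I_n -> 'I_K} * 'I_K) : {ffun 'I_n.+1 -> 'I_K} :=
  [ffun i : 'I_n.+1 => match (insub (val i) : option 'I_n) with Some i' => p.1 i' | None => p.2 end].
Definition splitf (f : {ffun 'I_n.+1 -> 'I_K}) : {ffun 'I_n -> 'I_K} * 'I_K :=
  ([ffun i : 'I_n => f (widen_ord (leqnSn n) i)], f ord_max).

Lemma joinK : cancel join splitf.
Proof.
case=> g a; rewrite /splitf /join; congr (_, _).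
- by apply/ffunP => i; rewrite !ffunE /= (valK i).
- by rewrite ffunE insubF //= ltnn.
Qed.

Lemma splitK : cancel splitf join.
Proof.
move=> f; apply/ffunP => i; rewrite ffunE.
case: insubP => [i' Hi Ei|Hi] /=; rewrite ?ffunE.
- by congr (f _); apply: val_inj.
- congr (f _); apply: val_inj => /=; apply/eqP; rewrite eqn_leq leqNgt Hi /=; by rewrite -ltnS ltn_ord.
Qed.

Lemma join_bij : bijective join.
Proof. exact: (Bijective joinK splitK). Qed.

Lemma join_max p : join p ord_max = p.2.
Proof. by rewrite ffunE insubF //= ltnn. Qed.

Lemma join_lt p (i : 'I_n) : join p (widen_ord (leqnSn n) i) = p.1 i.
Proof. by rewrite ffunE /= (valK i). Qed.

Lemma nth_join p m : (m < n)%N -> nth 0 (seqf (join p)) m = nth 0 (seqf p.1) m.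
Proof.
move=> hm.
have hm' : (m < n.+1)%N by lia.
rewrite (nth_seqf _ (Ordinal hm')) (nth_seqf _ (Ordinal hm)).
by rewrite -(join_lt p (Ordinal hm)); congr ((join p _).+1); apply: val_inj.
Qed.

Lemma nth_join_max p : nth 0 (seqf (join p)) n = (p.2 : nat).+1.
Proof. by rewrite (nth_seqf _ ord_max) join_max. Qed.
End Join.

Definition cntS k n (j : 'I_k.+1) : nat :=
  \sum_(f : {ffun 'I_n.+1 -> 'I_k.+1}) (ok n.+1 (nth 0 (seqf f)) && (f ord_max == j)).

Lemma cardA_sum n K : cardA n K = \sum_(f : {ffun 'I_n -> 'I_K}) ok n (nth 0 (seqf f)).
Proof.
rewrite /cardA -sum1dep_card big_mkcond; apply: eq_bigr => f _.
by rewrite inA_ok; case: ok.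
Qed.

Lemma collapse (T : finType) (x : T) (b : T -> bool) :
  \sum_(y : T) (b y && (y == x)) = b x.
Proof.
rewrite (bigD1 x) //= eqxx andbT big1 ?addn0 // => y hy.
by rewrite (negPf hy) andbF.
Qed.

Lemma collapse2 (T : finType) (x : T) (b : T -> bool) :
  \sum_(y : T) (b y && (x == y)) = b x.
Proof.
rewrite -(collapse x b); apply: eq_bigr => y _; by rewrite eq_sym.
Qed.

Lemma cardA_cnt n k : cardA n.+1 k.+1 = \sum_(j : 'I_k.+1) @cntS k n j.
Proof.
rewrite cardA_sum /cntS exchange_big /=; apply: eq_bigr => f _.
by rewrite collapse2.
Qed.

Lemma cardA0 K : cardA 0 K = 1.
Proof.
rewrite cardA_sum.
under eq_bigr => f _ do rewrite ok0.
by rewrite sum_nat_const card_ffun !card_ord expn0.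
Qed.

Lemma cnt0 k j : @cntS k 0 j = 1.
Proof.
rewrite /cntS (reindex (@join k.+1 0)); last exact: onW_bij (join_bij _ _).
transitivity (\sum_(g : {ffun 'I_0 -> 'I_k.+1}) \sum_(a : 'I_k.+1) (true && (a == j))).
  rewrite pair_big /=; apply: eq_bigr => -[g a] _ /=.
  by rewrite ok1 join_max.
under eq_bigr => g _ do rewrite collapse.
by rewrite sum_nat_const card_ffun !card_ord expn0.
Qed.

Lemma stepr_S n a b : stepr n a.+1 b.+1 = stepr n a b.
Proof. by []. Qed.

Lemma cnt_rec k n j :
  @cntS k n.+1 j = \sum_(i : 'I_k.+1 | stepr n i j) @cntS k n i.
Proof.
rewrite /cntS (reindex (@join k.+1 n.+1)); last exact: onW_bij (join_bij _ _).
transitivity (\sum_(g : {ffun 'I_n.+1 -> 'I_k.+1}) \sum_(a : 'I_k.+1)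
   ((ok n.+1 (nth 0 (seqf g)) && stepr n (g ord_max) a) && (a == j))).
  rewrite pair_big /=; apply: eq_bigr => -[g a] _ /=.
  rewrite ok_rec join_max (nth_join _ (ltnSn n)) nth_join_max (nth_seqf _ ord_max) stepr_S.
  rewrite (@ok_ext n.+1 _ (nth 0 (seqf g))) ?andbA // => m hm.
  by rewrite nth_join.
under eq_bigr => g _ do rewrite collapse.
rewrite exchange_big /=; apply: eq_bigr => g _.
case hs: (stepr n (g ord_max) j).
- rewrite (bigD1 (g ord_max)) //= eqxx andbT big1 ?addn0 // => i /andP [_ hi].
  by rewrite eq_sym (negPf hi) andbF.
- rewrite andbF big1 // => i hi; case: eqP => [e|]; last by rewrite andbF.
  by rewrite -e hs in hi.
Qed.

Unset Implicit Arguments. Set Strict Implicit.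
Local Open Scope ring_scope.

Lemma chebU_pairS (R : comNzRingType) n :
  chebU_pair R n.+1 = ((chebU_pair R n).2, 2%:R *: 'X * (chebU_pair R n).2 - (chebU_pair R n).1).
Proof. by rewrite /=; case: chebU_pair. Qed.

Lemma chebU_natSS (R : comNzRingType) n :
  chebU_nat R n.+2 = 2%:R *: 'X * chebU_nat R n.+1 - chebU_nat R n.
Proof. by rewrite /chebU_nat !chebU_pairS. Qed.

Lemma chebU_nat1 (R : comNzRingType) : chebU_nat R 1 = 2%:R *: 'X.
Proof. by []. Qed.

Lemma chebU_nat0 (R : comNzRingType) : chebU_nat R 0 = 1.
Proof. by []. Qed.

Lemma chebU_rec (R : comNzRingType) (n : int) :
  chebU R (n + 1) = 2%:R *: 'X * chebU R n - chebU R (n - 1).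
Proof.
case: n => [[|m]|[|[|m]]].
- by rewrite /= chebU_nat1 chebU_nat0 mulr1 subr0.
- have -> : (Posz m.+1 + 1 = Posz m.+2)%R by lia.
  have -> : (Posz m.+1 - 1 = Posz m)%R by lia.
  by rewrite /= chebU_natSS.
- by rewrite /= chebU_nat0 mulr0 sub0r opprK.
- by rewrite /= chebU_nat1 chebU_nat0 mulrN1 opprK addNr.
- have -> : (Negz m.+2 + 1 = Negz m.+1)%R by rewrite !NegzE; lia.
  have -> : (Negz m.+2 - 1 = Negz m.+3)%R by rewrite !NegzE; lia.
  rewrite /= chebU_natSS; ring.
Qed.

Lemma chebU_refl (R : comNzRingType) (m : int) :
  chebU R (- m) = - chebU R (m - 2).
Proof.
case: m => [[|[|m]]|m].
- by rewrite /= chebU_nat0 opprK.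
- by rewrite /= oppr0.
- have -> : (- Posz m.+2 = Negz m.+1)%R by rewrite NegzE.
  have -> : (Posz m.+2 - 2 = Posz m)%R by lia.
  by [].
- have -> : (- Negz m = Posz m.+1)%R by rewrite NegzE opprK.
  have -> : (Negz m - 2 = Negz m.+2)%R by rewrite !NegzE; lia.
  by rewrite /= opprK.
Qed.

Lemma chebU_half_rec (n : int) :
  chebU_half (n + 1) = 'X * chebU_half n - chebU_half (n - 1).
Proof.
rewrite /chebU_half chebU_rec comp_polyB comp_polyM comp_polyZ comp_polyX.
rewrite scalerA mulfV ?scale1r //. 
Qed.

Lemma chebU_half_refl (m : int) : chebU_half (- m) = - chebU_half (m - 2).
Proof. by rewrite /chebU_half chebU_refl -(sub0r (chebU _ _)) comp_polyB comp_poly0 sub0r. Qed.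

Definition Y (k : nat) (n : int) : {poly rat} :=
  chebU_half n + (-1) ^+ k.+1 *: chebU_half (n - 1).

Lemma Y_rec k (a b c : int) : b = a + 1 -> c = a + 2 -> Y k c = 'X * Y k b - Y k a.
Proof.
move=> -> ->; rewrite /Y.
have -> : a + 2 = (a + 1) + 1 by lia.
have -> : a + 1 + 1 - 1 = (a + 1 - 1) + 1 by lia.
rewrite !chebU_half_rec.
have -> : a + 1 - 1 = a by lia.
rewrite scalerBr scalerAr; ring.
Qed.

Lemma sign_sq (n : nat) : ((-1) ^+ n : rat) * (-1) ^+ n = 1.
Proof. by rewrite -exprD -signr_odd addnn odd_double. Qed.

Lemma chebU_half_refl' (m : int) : chebU_half (- m) = - chebU_half (m - 1 - 1).
Proof. rewrite chebU_half_refl; congr (- chebU_half _); lia. Qed.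

Lemma Y_refl k (m : int) : Y k (- m) = - ((-1) ^+ k.+1 *: Y k (m - 1)).
Proof.
rewrite /Y chebU_half_refl'.
have -> : - m - 1 = - (m + 1) by lia.
rewrite chebU_half_refl'.
have -> : m + 1 - 1 - 1 = m - 1 by lia.
rewrite scalerDr scalerA sign_sq scale1r scalerN opprD addrC.
by [].
Qed.

Definition P k (j : nat) : {poly rat} :=
  if (j < k)%N then (-1) ^+ j.+1 *: ('X * Y k (Posz k - 2 * Posz j - 1))
  else - Y k (Posz k - 1).

Lemma P_a k : P k 0 = (k == 0%N)%:R *: Y k (Posz k.+1) + 'X * P k k.
Proof.
rewrite /P ltnn; case: k => [|k].
- rewrite /= scale1r.
  rewrite (@Y_rec 0 (-1) 0 1) //.
  have -> : (Posz 0 - 1 = - 1)%R by [].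
  rewrite Y_refl; have -> : (1 - 1 = 0 :> int)%R by [].
  rewrite expr1 scaleN1r !opprK; ring.
- rewrite /= scale0r add0r expr1 scaleN1r.
  have -> : (Posz k.+1 - 2 * Posz 0 - 1 = Posz k.+1 - 1)%R by lia.
  ring.
Qed.

Lemma P_b k j : (j < k)%N ->
  P k j.+1 = P k j + 'X * P k (k - 1 - j) + (j.+1 == k)%:R *: Y k (Posz k.+1).
Proof.
move=> hjk; case: (ltnP j.+1 k) => h.
- have [t ->] : exists t, k = (j.+2 + t)%N by exists (k - j.+2)%N; lia.
  have -> : (j.+2 + t - 1 - j = t.+1)%N by lia.
  rewrite /P.
  have -> : (j.+1 < j.+2 + t)%N = true by lia.
  have -> : (j < j.+2 + t)%N = true by lia.
  have -> : (t.+1 < j.+2 + t)%N = true by lia.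
  have -> : (j.+1 == (j.+2 + t)%N) = false by lia.
  have [n en] : exists n : int, n = (Posz t - Posz j)%R by eexists.
  have -> : (Posz (j.+2 + t) - 2 * Posz j.+1 - 1 = n - 1)%R by rewrite en; lia.
  have -> : (Posz (j.+2 + t) - 2 * Posz j - 1 = n + 1)%R by rewrite en; lia.
  have -> : (Posz (j.+2 + t) - 2 * Posz t.+1 - 1 = - (n + 1))%R by rewrite en; lia.
  rewrite Y_refl.
  have -> : (n + 1 - 1 = n)%R by lia.
  rewrite (@Y_rec _ (n - 1) n (n + 1)); [|lia|lia].
  rewrite scale0r addr0 !exprS !exprD -[(-1) ^+ j]signr_odd -[(-1) ^+ t]signr_odd.
  case: (odd j); case: (odd t); rewrite ?expr1 ?expr0 -!mul_polyC !(polyCM, polyCN, polyC1); ring.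
- have ek : k = j.+1 by lia.
  subst k.
  rewrite /P ltnn.
  have -> : (j.+1 - 1 - j = 0)%N by lia.
  rewrite hjk /= eqxx scale1r expr1 scaleN1r.
  have -> : (Posz j.+1 - 2 * Posz j - 1 = - Posz j)%R by lia.
  have -> : (Posz j.+1 - 2 * Posz 0 - 1 = Posz j)%R by lia.
  have -> : (Posz j.+1 - 1 = Posz j)%R by lia.
  rewrite Y_refl.
  rewrite (@Y_rec _ (Posz j) (Posz j.+1) (Posz j.+2)); [|lia|lia].
  rewrite (@Y_rec _ (Posz j - 1) (Posz j) (Posz j.+1)); [|lia|lia].
  rewrite !exprS -[(-1) ^+ j]signr_odd.
  case: (odd j); rewrite ?expr1 ?expr0 -!mul_polyC !(polyCM, polyCN, polyC1); ring.
Qed.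

Lemma Pkey k j : (j <= k)%N ->
  P k j = (j == k)%:R *: Y k (Posz k.+1) + 'X * \sum_(k - j <= j' < k.+1) P k j'.
Proof.
elim: j => [_|j IH hj].
- by rewrite subn0 big_nat1 P_a eq_sym.
- rewrite P_b // IH ?(ltnW hj) //.
  have -> : (j == k) = false by lia.
  rewrite scale0r add0r (@big_ltn _ _ _ (k - j.+1)); last by lia.
  have -> : (k - j.+1).+1 = (k - j)%N by lia.
  have -> : (k - 1 - j = k - j.+1)%N by lia.
  rewrite mulrDr; ring.
Qed.

Fixpoint v (k : nat) (n : nat) (j : 'I_k.+1) : rat :=
  match n with
  | 0%N => (j == ord_max)%:R
  | n'.+1 => \sum_(i : 'I_k.+1 | (k <= j + i)%N) v k n' i
  end.

Lemma sumP k m (j : 'I_k.+1) :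
  (\sum_(k - j <= j' < k.+1) P k j')`_m = \sum_(i : 'I_k.+1 | (k <= j + i)%N) (P k i)`_m.
Proof.
rewrite coef_sum big_geq_mkord; apply: eq_bigl => i /=; lia.
Qed.

Lemma E_ind k m (j : 'I_k.+1) :
  \sum_(i < m.+1) v k i j * (Y k (Posz k.+1))`_(m - i) = (P k j)`_m.
Proof.
elim: m j => [|m IH] j.
- rewrite big_ord1 subnn (@Pkey k j (ltn_ord j)) [in RHS]coefD [in RHS]coefZ coefXM eqxx addr0.
  reflexivity.
- rewrite big_ord_recl subn0 (@Pkey k j (ltn_ord j)) [in RHS]coefD [in RHS]coefZ coefXM sumP.
  congr (_ + _).
  under eq_bigr => i _ do rewrite subSS big_distrl.
  rewrite exchange_big; apply: eq_bigr => i _.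
  by rewrite -IH.
Qed.

Lemma vS k n (j : 'I_k.+1) : v k n.+1 j = \sum_(i : 'I_k.+1 | (k <= j + i)%N) v k n i.
Proof. by []. Qed.

Lemma cnt_v k n (j : 'I_k.+1) :
  (@cntS k n j)%:R = v k n.+1 (if ~~ odd n then rev_ord j else j).
Proof.
elim: n j => [|n IH] j.
- rewrite cnt0 vS (bigD1 ord_max) /=; last by move: (ltn_ord j); lia.
  rewrite eqxx big1 ?addr0 // => i /andP [_ hi].
  by rewrite /= (negPf hi).
- rewrite cnt_rec natr_sum.
  under eq_bigr => i _ do rewrite IH.
  have -> : ~~ odd n.+1 = odd n by rewrite /= negbK.
  rewrite [RHS]vS.
  case: (boolP (odd n)) => h /=.
  + apply: eq_bigl => i; rewrite /stepr h /=; move: (ltn_ord i) (ltn_ord j); lia.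
  + rewrite [RHS](reindex_inj rev_ord_inj) /=; apply: eq_bigl => i.
    rewrite /stepr h /=; move: (ltn_ord i) (ltn_ord j); lia.
Qed.

Lemma sum_v k n : \sum_(j : 'I_k.+1) v k n j = (cardA n k.+1)%:R.
Proof.
case: n => [|n].
- rewrite cardA0 (bigD1 ord_max) //= eqxx big1 ?addr0 // => i hi.
  by rewrite (negPf hi).
- rewrite cardA_cnt natr_sum; apply/esym.
  under eq_bigr => j _ do rewrite cnt_v.
  case: (odd n); first by [].
  by rewrite [RHS](reindex_inj rev_ord_inj).
Qed.

Lemma Gcoef_v k i : Gcoef k.+1 i = v k i ord_max.
Proof.
case: i => [|n]; first by rewrite /= eqxx.
rewrite vS /= -sum_v; apply: eq_bigl => i; rewrite leq_addr.
by [].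
Qed.

Theorem corollary11 (k : nat) : (1 <= k)%N ->
  forall m : nat,
    \sum_(i < m.+1) Gcoef k i * (Gden k)`_(m - i) = - (Gnum k)`_m.
Proof.
case: k => // k _ m.
have -> : Gden k.+1 = Y k (Posz k.+1) by [].
under eq_bigr => i _ do rewrite Gcoef_v.
rewrite E_ind /P ltnn coefN.
congr (- _); congr (polyseq _)`_m.
rewrite /Gnum /Y; congr (chebU_half _ + _ *: chebU_half _); lia.
Qed.
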